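(* Suppose $(A,W)$ is a Pratt comonoid and $x_i$ $(i\in I)$ are elements of $W$ such that each $a\in A$ belongs to only finitely many of the $x_i$. Then $\bigcup_{i\in I}x_i\in W$.
   Context: A Pratt comonoid is a pair $(A,W)$ where $A$ is a set and $W$ is a set of subsets of $A$ such that (i) $\emptyset\in W$ and $A\in W$; (ii) whenever $C\subseteq A\times A$ is such that for every $a\in A$ both the $a$-th row $\{b\mid (a,b)\in C\}$ and the $a$-th column $\{b\mid (b,a)\in C\}$ belong to $W$ (a crossword over $W$), the diagonal $\{b\mid (b,b)\in C\}$ also belongs to $W$. *)

(* Defs.v *)
From mathcomp Require Import all_boot.
From mathcomp Require Import boolp classical_sets cardinality.
Set Implicit Arguments. Unset Strict Implicit. Unset Printing Implicit Defensive.
Local Open Scope classical_set_scope.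

Definition crossword (A : Type) (W : set (set A)) (C : set (A * A)) : Prop :=
  forall a : A, W [set b | C (a, b)] /\ W [set b | C (b, a)].

Definition diagonal (A : Type) (C : set (A * A)) : set A := [set b | C (b, b)].

Definition pratt_comonoid (A : Type) (W : set (set A)) : Prop :=
  [/\ W set0, W setT &
      forall C : set (A * A), crossword W C -> W (diagonal C)].

(* Main.v *)
Require Import Defs.
From mathcomp Require Import all_boot.
From mathcomp Require Import boolp classical_sets cardinality.
Local Open Scope classical_set_scope.

Lemma W_setU (A : Type) (W : set (set A)) (X Y : set A) :
  pratt_comonoid W -> W X -> W Y -> W (X `|` Y).
Proof.
case=> _ WT HC WX WY.
pose C : set (A * A) := [set p | X p.1 \/ Y p.2].
have -> : X `|` Y = Defs.diagonal C by [].
apply: HC => a; split.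
- have [Xa|nXa] := pselect (X a).
    suff -> : [set b | C (a, b)] = setT by [].
    by apply/seteqP; split=> b //= _; left.
  suff -> : [set b | C (a, b)] = Y by [].
  by apply/seteqP; split=> b /=; [case | right].
- have [Ya|nYa] := pselect (Y a).
    suff -> : [set b | C (b, a)] = setT by [].
    by apply/seteqP; split=> b //= _; right.
  suff -> : [set b | C (b, a)] = X by [].
  by apply/seteqP; split=> b /=; [case | left].
Qed.

Lemma W_seq (A : Type) (W : set (set A)) (I : Type) (x : I -> set A) :
  pratt_comonoid W -> (forall i, W (x i)) ->
  forall s : seq {classic I}, W [set b | exists2 i, i \in s & x i b].
Proof.
move=> PW Wx; elim=> [|i s IH].
  have [W0 _ _] := PW.
  suff -> : [set b | exists2 i : {classic I}, i \in [::] & x i b] = set0 by [].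
  by apply/seteqP; split=> b //= [].
suff -> : [set b | exists2 j : {classic I}, j \in i :: s & x j b] =
  x i `|` [set b | exists2 j, j \in s & x j b] by apply: W_setU.
apply/seteqP; split=> b /=.
  by case=> j; rewrite in_cons => /orP[/eqP -> | js] xb; [left | right; exists j].
case=> [xb | [j js xb]]; first by exists i; rewrite ?mem_head.
by exists j; rewrite // in_cons js orbT.
Qed.

Theorem lemma4p1 (A : Type) (W : set (set A)) (I : Type) (x : I -> set A) :
  pratt_comonoid W ->
  (forall i, W (x i)) ->
  (forall a : A, finite_set [set i | x i a]) ->
  W (\bigcup_(i in [set: I]) x i).
Proof.
move=> PW Wx Hfin.
have [_ _ HC] := PW.
pose C : set (A * A) := [set p | exists i, x i p.1 /\ x i p.2].
have -> : \bigcup_(i in [set: I]) x i = Defs.diagonal C.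
  apply/seteqP; split=> b /=; first by case=> i _ xb; exists i.
  by case=> i [xb _]; exists i.
have row : forall a, W [set b | exists i, x i a /\ x i b].
  move=> a.
  have := Hfin a.
  move/(@finite_seqP {classic I}) => [s Hs].
  suff -> : [set b | exists i, x i a /\ x i b] =
            [set b | exists2 i, i \in s & x i b] by apply: W_seq.
  apply/seteqP; split=> b /=.
    case=> i [xa xb]; exists i => //.
    have : [set i | x i a] i by [].
    by rewrite Hs.
  case=> i iS xb; exists i; split => //.
  have : ([set` s] : set {classic I}) i by [].
  by rewrite -Hs.
apply: HC => a; split.
  exact: row.
suff -> : [set b | C (b, a)] = [set b | exists i, x i a /\ x i b] by [].
by apply/seteqP; split=> b /= [i [? ?]]; exists i.
Qed.
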